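(* Let $q$ be a prime power and let $n$ be an odd positive integer coprime to $q$. Then $x-1$ is the only SCRIM factor of $x^{n}-1$ in $\mathbb{F}_{q^2}[x]$ if and only if for every prime divisor $l$ of $n$, $\mathrm{ord}_l(q^2)$ is even or $\mathrm{ord}_l(q)$ is odd.
   Context: $\mathbb{F}_{q^2}$ is the finite field with $q^2$ elements. For $\alpha\in\mathbb{F}_{q^2}$ put $\bar\alpha=\alpha^q$, and for $f(x)=\sum_i f_ix^i$ put $\overline{f(x)}=\sum_i \bar f_i x^i$. For $f(x)$ with $f(0)\neq 0$, $f^*(x)=x^{\deg f}f(0)^{-1}f(1/x)$ and $f^\dagger(x)=\overline{f^*(x)}$. A polynomial is SCRIM if it is monic, irreducible over $\mathbb{F}_{q^2}$, has nonzero constant term, and satisfies $f=f^\dagger$. A SCRIM factor of $x^n-1$ is a SCRIM polynomial dividing $x^n-1$ in $\mathbb{F}_{q^2}[x]$. $\mathrm{ord}_l(a)$ denotes the multiplicative order of $a$ modulo $l$. *)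

(* Defs.v *)
From HB Require Import structures.
From mathcomp Require Import all_boot all_order all_algebra all_field.
Set Implicit Arguments. Unset Strict Implicit. Unset Printing Implicit Defensive.
Import GRing.Theory.
Local Open Scope ring_scope.

(* F plays the role of F_{q^2}; conjugation is a |-> a^q. *)
Definition pconj (F : fieldType) (q : nat) (f : {poly F}) : {poly F} :=
  map_poly (fun a : F => a ^+ q) f.

(* f^*(x) = x^{deg f} f(0)^{-1} f(1/x): the coefficient list of
   x^{deg f} f(1/x) is the reversed coefficient list of f. *)
Definition recip (F : fieldType) (f : {poly F}) : {poly F} :=
  (f`_0)^-1 *: Poly (rev f).

Definition dagger (F : fieldType) (q : nat) (f : {poly F}) : {poly F} :=
  pconj q (recip f).

Definition SCRIM (F : fieldType) (q : nat) (f : {poly F}) : Prop :=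
  [/\ f \is monic, irreducible_poly f, f`_0 != 0 & f = dagger q f].

(* multiplicative order of a modulo l: least k > 0 with a^k = 1 (mod l).
   Searched among 0..l-1; this covers every case with l prime and
   coprime to a (the order divides l-1). *)
Definition ord_mod (l a : nat) : nat :=
  find (fun k => (0 < k)%N && (a ^ k == 1 %[mod l])) (iota 0 l).

(* Main.v *)
Require Import Defs.
From HB Require Import structures.
From mathcomp Require Import all_boot all_order all_algebra all_field.
From mathcomp Require Import zify.
From Stdlib Require Import Classical.
Set Implicit Arguments. Unset Strict Implicit. Unset Printing Implicit Defensive.
Import GRing.Theory.
Local Open Scope ring_scope.

Lemma frob_sum (K : fieldType) (N : nat) (HN : [pchar K].-nat N) (I : Type) (r : seq I)
  (P : pred I) (G : I -> K) :
  (\sum_(i <- r | P i) G i) ^+ N = \sum_(i <- r | P i) (G i) ^+ N.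
Proof.
have N0 : (0 < N)%N by case/andP: HN.
apply: (big_morph (fun x => x ^+ N)) => [x y|]; first exact: exprDn_pchar.
by rewrite expr0n eqn0Ngt N0.
Qed.

Lemma frob_horner (F K : fieldType) (io : {rmorphism F -> K}) (N : nat)
  (HN : [pchar K].-nat N) (h h' : {poly F}) (z : K) :
  (forall i, h'`_i = h`_i ^+ N) ->
  ((map_poly io h).[z]) ^+ N = (map_poly io h').[z ^+ N].
Proof.
move=> Hc.
rewrite !(@horner_coef_wide _ (size h + size h')%N) ?size_map_poly ?leq_addr ?leq_addl //.
rewrite frob_sum //; apply: eq_bigr => i _.
by rewrite !coef_map Hc exprMn -(rmorphXn io) -!exprM mulnC.
Qed.

Lemma frob_inj (K : fieldType) (N : nat) (HN : [pchar K].-nat N) (x y : K) :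
  x ^+ N = y ^+ N -> x = y.
Proof.
move=> E; apply/eqP; rewrite -subr_eq0.
have N0 : (0 < N)%N by case/andP: HN.
have : (x - y) ^+ N == 0 by rewrite exprDn_pchar // exprNn_pchar // E subrr.
by rewrite expf_eq0 N0.
Qed.

Lemma conj_roots (F K : finFieldType) (io : {rmorphism F -> K}) (f : {poly F}) (a : K) :
  [pchar K].-nat #|F| ->
  (forall z : K, exists g, z = (map_poly io g).[a]) ->
  #|K| = (#|F| ^ (size f).-1)%N ->
  root (map_poly io f) a -> f != 0 ->
  forall c, root (map_poly io f) c -> exists j, c = a ^+ (#|F| ^ j)%N.
Proof.
move=> HQ Hsurj HK Ha f0 c Hc.
set Q := #|F| in HQ HK *; set m := (size f).-1 in HK.
have HQn j : [pchar K].-nat (Q ^ j)%N by rewrite pnatX HQ.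
have fixF j (x : F) : x ^+ (Q ^ j)%N = x.
  elim: j => [|j IH]; first by rewrite expn0 expr1.
  by rewrite expnS exprM expf_card IH.
have frobK j (g : {poly F}) : ((map_poly io g).[a]) ^+ (Q ^ j)%N = (map_poly io g).[a ^+ (Q ^ j)%N].
  by apply: frob_horner => // i; rewrite fixF.
have Q1 : (1 < Q)%N by exact: card_finNzRing_gt1.
have rootQ j : root (map_poly io f) (a ^+ (Q ^ j)%N).
  by rewrite /root -frobK (eqP Ha) expf_eq0 eqxx andbT expn_gt0 (ltnW Q1).
have fs : (1 < size f)%N by rewrite -(size_map_poly io); apply: (root_size_gt1 _ Ha); rewrite map_poly_eq0.
have Pm : a ^+ (Q ^ m)%N = a by rewrite -HK expf_card.
have exr : exists r, (0 < r)%N && (a ^+ (Q ^ r)%N == a).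
  by exists m; rewrite Pm eqxx andbT /m -ltnS prednK // ltnW.
case: (ex_minnP exr) => r /andP[r0 /eqP ar] rmin.
have mr : (m <= r)%N.
  have allz (z : K) : z ^+ (Q ^ r)%N = z.
    by have [g ->] := Hsurj z; rewrite frobK ar.
  have N1 : (1 < Q ^ r)%N by rewrite -{1}(expn0 Q) ltn_exp2l.
  have szp : size ('X^(Q ^ r)%N - 'X : {poly K}) = (Q ^ r)%N.+1.
    by rewrite size_polyDl size_polyXn // size_polyN size_polyX ltnS.
  have := @max_poly_roots _ ('X^(Q ^ r)%N - 'X) (enum K).
  rewrite -size_poly_eq0 szp enum_uniq -cardE HK ltnS leq_exp2l //.
  apply=> //; apply/allP => z _; by rewrite /root !hornerE allz subrr.
pose s := [seq a ^+ (Q ^ j)%N | j <- iota 0 r].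
have us : uniq s.
  rewrite map_inj_in_uniq ?iota_uniq // => i j; rewrite !mem_iota /= !add0n => ir jr.
  have key i' j' : (i' < j')%N -> (j' < r)%N -> a ^+ (Q ^ i')%N = a ^+ (Q ^ j')%N -> False.
    move=> ij jr' E.
    have E2 : (a ^+ (Q ^ (j' - i'))%N) ^+ (Q ^ i')%N = a ^+ (Q ^ i')%N.
      by rewrite -exprM -expnD subnK ?E // ltnW.
    have E3 := frob_inj (HQn i') E2.
    have := rmin (j' - i')%N; rewrite subn_gt0 ij E3 eqxx => /(_ isT).
    by rewrite leqNgt (leq_ltn_trans (leq_subr _ _) jr').
  move=> E; case: (ltngtP i j) => // [ij|ji].
    by case: (key i j).
  by case: (key j i).
have [cs|ncs] := boolP (c \in s).
  by case/mapP: cs => j _ ->; exists j.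
have := @max_poly_roots _ (map_poly io f) (c :: s).
rewrite map_poly_eq0 f0 /= Hc ncs us size_map_poly size_map size_iota.
have -> : all (root (map_poly io f)) s by apply/allP => z /mapP[j _ ->].
move=> /(_ isT isT isT); rewrite -(prednK (ltnW fs)) ltnS -/m.
by rewrite ltnNge mr.
Qed.

Lemma size_map_leq (R S : nzRingType) (g : R -> S) (p : {poly R}) :
  (size (map_poly g p) <= size p)%N.
Proof. by rewrite /map_poly; apply: size_poly. Qed.

Lemma dagger_eval (F K : fieldType) (io : {rmorphism F -> K}) (q : nat) (f : {poly F}) (z : K) :
  (0 < q)%N -> z != 0 ->
  (map_poly io (dagger q f)).[z] =
    io ((f`_0)^-1 ^+ q) * z ^+ (size f).-1 * (map_poly io (pconj q f)).[z^-1].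
Proof.
move=> q0 z0.
set n := size f.
have s1 : (size (dagger q f) <= n)%N.
  rewrite /dagger /pconj /recip (leq_trans (size_map_leq _ _)) //.
  by rewrite (leq_trans (size_scale_leq _ _)) // (leq_trans (size_Poly _)) // size_rev.
have s2 : (size (pconj q f) <= n)%N by apply: size_map_leq.
have g0 : (fun a : F => a ^+ q) 0 = 0 by rewrite /= expr0n eqn0Ngt q0.
rewrite !(@horner_coef_wide _ n) ?size_map_poly //.
rewrite -mulrA !big_distrr /= (reindex_inj rev_ord_inj) /=.
apply: eq_bigr => j _.
have jn : (n - j.+1 < n)%N by have := ltn_ord j; lia.
rewrite !coef_map /dagger /pconj !coef_map_id0 // /recip coefZ coef_Poly /=.
rewrite nth_rev ?size_rev // -/n.
have -> : (n - (n - j.+1).+1 = j)%N by have := ltn_ord j; lia.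
rewrite exprMn rmorphM /= -!mulrA; congr (_ * _).
rewrite mulrCA; congr (_ * _).
have -> : n.-1 = (n - j.+1 + j)%N by have := ltn_ord j; lia.
rewrite exprD -mulrA exprVn mulrV ?mulr1 //.
by rewrite unitfE expf_neq0.
Qed.

Lemma dag_root (F K : fieldType) (io : {rmorphism F -> K}) (q : nat) (f : {poly F}) (z : K) :
  [pchar K].-nat q -> (forall a : F, (a ^+ q) ^+ q = a) -> f`_0 != 0 -> z != 0 ->
  root (map_poly io (dagger q f)) z = root (map_poly io f) (z^-1 ^+ q).
Proof.
move=> pq ss c0 z0.
have q0 : (0 < q)%N by case/andP: pq.
rewrite /root dagger_eval // !mulf_eq0 fmorph_eq0 !expf_eq0 q0 invr_eq0 (negbTE c0).
rewrite (negbTE z0) !andbF /=.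
rewrite -(frob_horner io pq (h := pconj q f) (h' := f)); first by rewrite expf_eq0 q0.
by move=> i; rewrite /pconj coef_map_id0 ?ss //= expr0n eqn0Ngt q0.
Qed.

Lemma dagger_monic (F : fieldType) (q : nat) (f : {poly F}) :
  (0 < q)%N -> f`_0 != 0 -> f \is monic ->
  dagger q f \is monic /\ size (dagger q f) = size f.
Proof.
move=> q0 c0 fM.
have PR : Poly (rev f) = rev f :> seq F.
  apply: (PolyK (c := 0)); move: c0; case E: (polyseq f) => [|x s].
    by rewrite /= eqxx.
  by rewrite /= rev_cons last_rcons.
have sR : size (recip f) = size f by rewrite /recip size_scale ?invr_eq0 // PR size_rev.
have fs : (0 < size f)%N by rewrite size_poly_gt0; apply: contraNneq c0 => ->; rewrite coef0.
have lR : lead_coef (recip f) = 1.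
  rewrite lead_coefE sR /recip coefZ coef_Poly nth_rev ?prednK //.
  by rewrite subnn mulVf.
have g0 : (fun a : F => a ^+ q) 0 = 0 by rewrite /= expr0n eqn0Ngt q0.
have g1 : (fun a : F => a ^+ q) (lead_coef (recip f)) != 0 by rewrite lR expr1n oner_neq0.
split; rewrite /dagger /pconj.
  by rewrite monicE lead_coef_map_id0 // lR expr1n.
by rewrite size_map_poly_id0.
Qed.

Lemma dagger_XsubC (F : fieldType) (q : nat) : [pchar F].-nat q ->
  dagger q ('X - 1 : {poly F}) = 'X - 1.
Proof.
move=> pq; have q0 : (0 < q)%N by case/andP: pq.
have g0 : (fun a : F => a ^+ q) 0 = 0 by rewrite /= expr0n eqn0Ngt q0.
have E : polyseq ('X - 1 : {poly F}) = [:: -1; 1] by rewrite -polyC1 polyseqXsubC.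
apply/polyP => i.
rewrite /dagger /pconj /recip coef_map_id0 // coefZ coef_Poly E /=.
rewrite -[in RHS]E.
case: i => [|[|i]] /=.
- by rewrite coefB coefX coef1 /= sub0r invrN1 mulr1 exprNn_pchar // expr1n.
- by rewrite coefB coefX coef1 /= subr0 invrN1 mulrNN mulr1 expr1n.
- by rewrite coefB coefX coef1 /= subr0 nth_nil mulr0 expr0n eqn0Ngt q0.
Qed.

Lemma irr_factor (F : fieldType) (g : {poly F}) : (1 < size g)%N ->
  exists f, [/\ f \is monic, irreducible_poly f & f %| g].
Proof.
have [n] := ubnP (size g); elim: n g => // n IH g gn g1.
have g0 : g != 0 by rewrite -size_poly_gt0 ltnW.
have c0 : (lead_coef g)^-1 != 0 by rewrite invr_eq0 lead_coef_eq0.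
case: (classic (irreducible_poly g)) => [gI | ngI].
  exists ((lead_coef g)^-1 *: g); split.
  - by rewrite monicE lead_coefZ mulVf // lead_coef_eq0.
  - split; first by rewrite size_scale.
    move=> h h1 hd; rewrite (eqp_dvdr _ (eqp_scale _ c0)) in hd.
    apply: eqp_trans (gI h h1 hd) _; rewrite eqp_sym; exact: eqp_scale.
  - by rewrite dvdpZl.
have [h [h1 hd nh]] : exists h : {poly F}, [/\ size h != 1%N, h %| g & ~ (h %= g)].
  apply: NNPP => N; apply: ngI; split => // h h1 hd.
  apply/negPn/negP => nh; apply: N; exists h; split => //; exact/negP.
have h0 : h != 0.
  by apply/eqP => h0; move: hd; rewrite h0 dvd0p => /eqP g0'; rewrite g0' eqxx in g0.
have hs : (1 < size h)%N by move: h1 h0; rewrite -size_poly_eq0; case: (size h) => [|[]].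
have hg : (size h < size g)%N.
  rewrite ltn_neqAle dvdp_leq // andbT; apply/negP => E.
  by apply: nh; rewrite -dvdp_size_eqp.
have [f [fM fI fd]] := IH h (leq_trans hg gn) hs.
by exists f; split => //; apply: dvdp_trans hd.
Qed.

Lemma pow_gcd1 (K : fieldType) (x : K) (a b : nat) : (0 < a)%N ->
  x ^+ a = 1 -> x ^+ b = 1 -> x ^+ (gcdn a b) = 1.
Proof.
move=> a0 xa xb.
have [u _ /dvdnP[k Ek]] := Bezoutl b a0.
have : x ^+ (gcdn a b + u * b) = 1 by rewrite Ek mulnC exprM xa expr1n.
by rewrite exprD mulnC exprM xb expr1n mulr1.
Qed.

Local Close Scope ring_scope.

Lemma fermat1 l a : prime l -> coprime l a -> a ^ l.-1 = 1 %[mod l].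
Proof.
move=> pl cla.
have l1 := prime_gt1 pl.
have a0 : (0 < a)%N.
  case: a cla => // ; rewrite /coprime gcdn0 => /eqP E; by rewrite E in l1.
have F := fermat_little a pl.
have E : (a ^ l = a * a ^ l.-1)%N by rewrite -expnS prednK // ltnW.
apply/eqP; rewrite eqn_mod_dvd ?expn_gt0 ?a0 //.
rewrite -(Gauss_dvdr _ cla) mulnBr muln1 -E -eqn_mod_dvd ?F //.
by rewrite E leq_pmulr // expn_gt0 a0.
Qed.

Section Ord.
Variables (l a : nat).
Hypotheses (pl : prime l) (cla : coprime l a).

Let P := fun k => (0 < k) && (a ^ k == 1 %[mod l]).

Lemma hasP_ord : has P (iota 0 l).
Proof.
apply/hasP; exists l.-1.
  by rewrite mem_iota add0n /= prednK ?leqnn ?andbT // prime_gt0.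
rewrite /P fermat1 // eqxx andbT -ltnS prednK ?prime_gt1 // prime_gt0 //.
Qed.

Lemma ord_mod_spec : (0 < ord_mod l a) && (a ^ ord_mod l a == 1 %[mod l]).
Proof.
have := nth_find 0 hasP_ord; rewrite -/(ord_mod l a).
have := hasP_ord; rewrite has_find size_iota => H.
by rewrite nth_iota // add0n.
Qed.

Lemma ord_mod_gt0 : (0 < ord_mod l a)%N.
Proof. by case/andP: ord_mod_spec. Qed.

Lemma ord_modP k : (a ^ k == 1 %[mod l]) = (ord_mod l a %| k).
Proof.
set o := ord_mod l a.
have /andP[o0 /eqP ao] := ord_mod_spec; rewrite -/o in o0 ao.
have H t : a ^ (o * t) = 1 %[mod l] by rewrite expnM -modnXm ao modnXm exp1n.
have -> : (a ^ k = a ^ (o * (k %/ o)) * a ^ (k %% o))%N by rewrite -expnD mulnC -divn_eq.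
rewrite -modnMml H modnMml mul1n.
apply/idP/idP => [E|].
  rewrite /dvdn; apply/negPn/negP => nz.
  have ko : (k %% o < o)%N by rewrite ltn_mod.
  have := before_find 0 ko.
  rewrite nth_iota ?add0n ?lt0n ?nz ?E //.
  have := hasP_ord; rewrite has_find size_iota => H2.
  by rewrite (ltn_trans ko).
by rewrite /dvdn => /eqP ->; rewrite expn0.
Qed.

End Ord.

Lemma ord_sq_even l q : prime l -> coprime l q -> ~~ odd (ord_mod l q) ->
  ord_mod l (q ^ 2) = (ord_mod l q)./2.
Proof.
move=> pl clq eo.
set o := ord_mod l q; set o' := o./2.
have oo : o = (o' * 2)%N by rewrite -{1}(odd_double_half o) (negbTE eo) add0n muln2.
have clq2 : coprime l (q ^ 2) by apply: coprimeXr.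
have key k : (ord_mod l (q ^ 2) %| k) = (o' %| k).
  by rewrite -ord_modP // -expnM ord_modP // -/o oo (mulnC 2 k) dvdn_pmul2r.
apply/eqP; rewrite eqn_dvd key dvdnn -key dvdnn //.
Qed.

Lemma NT1 l q s : prime l -> odd l -> coprime l q -> odd s -> (l %| q ^ s + 1)%N ->
  odd (ord_mod l (q ^ 2)) && ~~ odd (ord_mod l q).
Proof.
move=> pl ol clq os dl.
set o := ord_mod l q.
have o0 : (0 < o)%N by apply: ord_mod_gt0.
have q2s : (q ^ (s * 2) == 1 %[mod l])%N.
  rewrite -(eqn_modDr (q ^ s)).
  have -> : (q ^ (s * 2) + q ^ s = q ^ s * (q ^ s + 1))%N by rewrite mulnDr muln1 -expnD addnn -muln2.
  have A : (q ^ s * (q ^ s + 1)) %% l = 0 by apply/eqP; rewrite -/(dvdn _ _) dvdn_mull.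
  have B : (1 + q ^ s) %% l = 0 by apply/eqP; rewrite addnC.
  by rewrite A B.
have n_os : ~~ (o %| s).
  apply/negP; rewrite -ord_modP // => /eqP E.
  have : (l %| 2)%N by move: dl; rewrite /dvdn -modnDml E modnDml.
  rewrite dvdn_prime2 // => /eqP l2; by rewrite l2 in ol.
have o2s : (o %| s * 2)%N by rewrite -ord_modP.
have eo : ~~ odd o.
  apply/negP => oo; move: n_os; by rewrite -(Gauss_dvdl _ (_ : coprime o 2)) ?o2s // coprimen2.
rewrite eo andbT ord_sq_even //.
have oo : o = (o./2 * 2)%N by rewrite -{1}(odd_double_half o) (negbTE eo) add0n muln2.
move: o2s; rewrite oo dvdn_pmul2r // => /dvdnP[t st].
by move: os; rewrite st oddM => /andP[].
Qed.

Lemma NT2 l q : prime l -> coprime l q ->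
  odd (ord_mod l (q ^ 2)) -> ~~ odd (ord_mod l q) ->
  exists s, odd s && (l %| q ^ s + 1)%N.
Proof.
move=> pl clq oo2 eo.
have E := ord_sq_even pl clq eo.
set o := ord_mod l q in eo E *.
have o0 : (0 < o)%N by apply: ord_mod_gt0.
have oo : o = (o./2 * 2)%N by rewrite -{1}(odd_double_half o) (negbTE eo) add0n muln2.
exists o./2; rewrite -E oo2 /=.
have qp : (0 < q)%N.
  move: clq; case: (posnP q) => [->|//].
  by rewrite /coprime gcdn0 => /eqP l1; move: (prime_gt1 pl); rewrite l1.
have q0 : (0 < q ^ o./2)%N by rewrite expn_gt0 qp.
have h1 : (q ^ (o./2 * 2) == 1 %[mod l])%N by rewrite ord_modP // -(oo) dvdnn.
have h2 : ~~ (q ^ o./2 == 1 %[mod l])%N.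
  have h : (0 < o./2)%N by move: o0; rewrite {1}oo muln_gt0 => /andP[].
  rewrite ord_modP //; apply/negP => /(dvdn_leq h); rewrite -/o.
  move: oo h; generalize (o./2) => t; lia.
move: h1; rewrite eqn_mod_dvd ?expn_gt0 ?(ltnW (prime_gt1 pl)) //; last first.
  by rewrite qp.
rewrite E expnM -(exp1n 2) subn_sqr Euclid_dvdM // => /orP[|//].
by rewrite -eqn_mod_dvd // (negbTE h2).
Qed.

Local Open Scope ring_scope.

Lemma ext_exists (F : finFieldType) (f : {poly F}) :
  f \is monic -> irreducible_poly f ->
  exists (K : finFieldType) (io : {rmorphism F -> K}) (a : K),
    [/\ forall g, root (map_poly io g) a = (f %| g),
        forall z : K, exists g, z = (map_poly io g).[a]
      & #|K| = (#|F| ^ (size f).-1)%N].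
Proof.
move=> fM fI.
have hI : monic_irreducible_poly f by split.
pose K : finFieldType := {poly %/ f with hI}.
pose io : {rmorphism F -> K} := qpolyC f.
have E g : (map_poly io g).[('qX : K)] = in_qpoly f g.
  by rewrite -in_qpoly_comp_horner comp_polyXr.
exists K, io, 'qX; split.
- move=> g; rewrite /root E.
  apply/eqP/idP => [/val_eqP /= | hDp].
    by rewrite -Pdiv.IdomainMonic.modpE ?mk_monicE.
  by apply/val_eqP; rewrite /= -Pdiv.IdomainMonic.modpE ?mk_monicE.
- move=> z; exists (val z); rewrite E; apply: val_inj => /=.
  symmetry; apply: in_qpoly_small; exact: size_mk_monic.
- exact: card_qfpoly.
Qed.

Lemma root_frobQ (F : finFieldType) (K : fieldType) (io : {rmorphism F -> K})
  (f : {poly F}) (a : K) (j : nat) :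
  [pchar K].-nat #|F| -> root (map_poly io f) a -> root (map_poly io f) (a ^+ (#|F| ^ j)%N).
Proof.
move=> HQ ra.
have HQn : [pchar K].-nat (#|F| ^ j)%N by rewrite pnatX HQ.
have fixF (x : F) : x ^+ (#|F| ^ j)%N = x.
  elim: j {HQn} => [|j IH]; first by rewrite expn0 expr1.
  by rewrite expnS exprM expf_card IH.
rewrite /root -(frob_horner io HQn (h := f)); last by move=> i; rewrite fixF.
by rewrite (eqP ra) expf_eq0 eqxx andbT; case/andP: HQn.
Qed.

Lemma root_Xn1 (F K : fieldType) (io : {rmorphism F -> K}) (m : nat) (x : K) :
  root (map_poly io ('X^m - 1)) x = (x ^+ m == 1).
Proof. by rewrite /root rmorphB /= map_polyXn rmorph1 !hornerE subr_eq0. Qed.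

Lemma root_dvd (F : fieldType) (f g : {poly F}) (x : F) : f %| g -> root f x -> root g x.
Proof. by move=> /dvdpP[h ->]; rewrite rootM => ->; rewrite orbT. Qed.

Lemma Xn1_dvd (F : fieldType) (l n : nat) : (l %| n)%N -> ('X^l - 1 : {poly F}) %| 'X^n - 1.
Proof.
move=> /dvdnP[t ->]; rewrite mulnC exprM [X in _ %| X]subrX1; exact: dvdp_mulIl.
Qed.

Unset Implicit Arguments.

Theorem corollary2p4 (F : finFieldType) (q n : nat) :
  (exists p k : nat, [/\ prime p, (0 < k)%N & q = (p ^ k)%N]) ->
  #|F| = (q ^ 2)%N ->
  (0 < n)%N -> odd n -> coprime n q ->
  ((forall f : {poly F}, SCRIM q f /\ f %| 'X^n - 1 <-> f = 'X - 1) <->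
   (forall l : nat, prime l -> (l %| n)%N ->
      ~~ odd (ord_mod l (q ^ 2)) || odd (ord_mod l q))).
Proof.
move=> [p [k [pp k0 qE]]] HF n0 on cnq.
have pF : p \in [pchar F].
  by apply: (card_finPcharP (n := (k * 2)%N)); rewrite // HF qE -expnM.
have pqF : [pchar F].-nat q by rewrite (eq_pnat _ (pcharf_eq pF)) qE pnatX pnat_id.
have q0 : (0 < q)%N by rewrite qE expn_gt0 prime_gt0.
have ss : forall a : F, (a ^+ q) ^+ q = a by move=> a; rewrite -exprM mulnn -HF expf_card.
have pK : forall (K : fieldType) (io : {rmorphism F -> K}) N,
    [pchar F].-nat N -> [pchar K].-nat N.
  by move=> K io N; rewrite (eq_pnat _ (fmorph_pchar io)).
have pQF : [pchar F].-nat #|F| by rewrite HF pnatX pqF.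
have XsubC_ok : SCRIM q ('X - 1 : {poly F}) /\ ('X - 1 : {poly F}) %| 'X^n - 1.
  split; last by rewrite [X in _ %| X]subrX1 dvdp_mulIl.
  split.
  - by rewrite -polyC1 monicXsubC.
  - by rewrite -polyC1; apply: irredp_XsubC.
  - by rewrite coefB coefX coef1 sub0r oppr_eq0 oner_eq0.
  - by rewrite dagger_XsubC.
split.
- move=> H l pl ln.
  case: (boolP (odd (ord_mod l (q ^ 2)) && ~~ odd (ord_mod l q))) => [/andP[o2 eo]|];
    last by rewrite negb_and negbK.
  exfalso.
  have clq : coprime l q by apply: coprime_dvdl ln cnq.
  have [s /andP[os ls]] := NT2 pl clq o2 eo.
  pose g : {poly F} := \sum_(i < l) 'X^i.
  have gX : 'X^l - 1 = ('X - 1) * g by rewrite subrX1.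
  have lF : l%:R != 0 :> F.
    apply/negP => /eqP l0.
    have : l \in [pchar F] by rewrite inE pl l0 eqxx.
    rewrite (pcharf_eq pF) inE => /eqP lp; subst l.
    have : (p %| gcdn n q)%N by rewrite dvdn_gcd ln qE dvdn_exp.
    by move: cnq; rewrite /coprime => /eqP ->; rewrite dvdn1 => /eqP p1; move: pp; rewrite p1.
  have g1 : g.[1] = l%:R.
    rewrite horner_sum; under eq_bigr do rewrite hornerXn expr1n.
    by rewrite sumr_const card_ord.
  have g0 : g != 0 by apply: contraNneq lF => g0'; rewrite -g1 g0' horner0.
  have gs : (1 < size g)%N.
    have := congr1 (fun r : {poly F} => size r) gX.
    rewrite -polyC1 size_XnsubC ?prime_gt0 // mulrC size_Mmonic ?monicXsubC // size_XsubC.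
    move=> E; have := prime_gt1 pl; move: E; rewrite -[2%R]/2%N; lia.
  have [f [fM fI fd]] := irr_factor gs.
  have fl : f %| 'X^l - 1 by rewrite (dvdp_trans fd) // gX dvdp_mulIr.
  have fX : f %| 'X^n - 1 by rewrite (dvdp_trans fl) // Xn1_dvd.
  have f1 : ~~ root f 1.
    by apply/negP => /(root_dvd fd); rewrite /root g1 (negbTE lF).
  have fne : f != 'X - 1.
    by apply: contraNneq f1 => ->; rewrite -polyC1 root_XsubC.
  have f0 : f`_0 != 0.
    apply/negP => /eqP c0.
    have : root ('X^n - 1 : {poly F}) 0 by apply: (root_dvd fX); rewrite /root horner_coef0 c0.
    by rewrite /root !hornerE expr0n eqn0Ngt n0 /= sub0r oppr_eq0 oner_eq0.
  have [K [io [a [Hr Hs HK]]]] := ext_exists fM fI.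
  have ra : root (map_poly io f) a by rewrite Hr dvdpp.
  have al : a ^+ l = 1 by apply/eqP; rewrite -(root_Xn1 io) Hr.
  have a0 : a != 0 by apply: contra_eq_neq al => ->; rewrite expr0n eqn0Ngt prime_gt0 // eq_sym oner_eq0.
  have aqs : a ^+ (q ^ s)%N * a = 1.
    by move: ls => /dvdnP[t Et]; rewrite -exprSr -addn1 Et mulnC exprM al expr1n.
  have ainv : a^-1 = a ^+ (q ^ s)%N by rewrite -[a^-1]mul1r -aqs mulrK // unitfE.
  have st : (s.+1 = s./2.+1 * 2)%N.
    by move: (odd_double_half s); rewrite os -muln2; move: (s./2) => t <-; rewrite mulSn add2n -addn1 addnC.
  have rinv : root (map_poly io f) (a^-1 ^+ q).
    have -> : a^-1 ^+ q = a ^+ (#|F| ^ s./2.+1)%N.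
      by rewrite ainv -exprM -expnSr HF -expnM mulnC -st.
    by apply: root_frobQ => //; apply: pK.
  have fdag : f %| dagger q f by rewrite -Hr dag_root // pK.
  have [dM dS] := dagger_monic q0 f0 fM.
  have fE : f = dagger q f.
    apply/eqP; rewrite -eqp_monic //; move: (dvdp_size_eqp fdag); rewrite dS eqxx => <- //.
  by move/eqP: fne; apply; apply/H; split => //; split.
- move=> Hc f; split; last by move=> ->.
  move=> [[fM fI f0 fd] fX].
  have [K [io [a [Hr Hs HK]]]] := ext_exists fM fI.
  have ra : root (map_poly io f) a by rewrite Hr dvdpp.
  have an : a ^+ n = 1 by apply/eqP; rewrite -(root_Xn1 io) Hr.
  have a0 : a != 0 by apply: contra_eq_neq an => ->; rewrite expr0n eqn0Ngt n0 eq_sym oner_eq0.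
  have r2 : root (map_poly io f) (a^-1 ^+ q).
    by rewrite -(dag_root io (pK _ io _ pqF) ss f0 a0) -fd.
  have [j ej] := conj_roots (pK _ io _ pQF) Hs HK ra (irredp_neq0 fI) r2.
  have e1 : a ^+ (q ^ (j * 2) + q)%N = 1.
    by rewrite exprD mulnC expnM -HF -ej -exprMn mulVf // expr1n.
  have [s [os es]] : exists s, odd s /\ a ^+ (gcdn n (q ^ s + 1)) = 1.
    case: j e1 {ej} => [|j] e1.
      by exists 1%N; split => //; apply: pow_gcd1 => //; rewrite expn1 addnC -(expn0 q).
    exists (j * 2).+1; split; first by rewrite /= oddM andbF.
    have E : (q ^ (j.+1 * 2) + q = q * (q ^ (j * 2).+1 + 1))%N.
      by rewrite mulnDr muln1 -expnS mulSn add2n.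
    rewrite E in e1.
    have := pow_gcd1 n0 an e1.
    by rewrite Gauss_gcdr // coprime_sym.
  have G0 : (0 < gcdn n (q ^ s + 1))%N by rewrite gcdn_gt0 n0.
  case: (ltngtP (gcdn n (q ^ s + 1)) 1) => [|G1|G1].
  + by rewrite ltnS leqn0 => /eqP G; rewrite G in G0.
  + exfalso.
    set G := gcdn n (q ^ s + 1) in G1 es G0.
    have pl := pdiv_prime G1.
    have ln : (pdiv G %| n)%N by rewrite (dvdn_trans (pdiv_dvd G)) ?dvdn_gcdl.
    have lq : (pdiv G %| q ^ s + 1)%N by rewrite (dvdn_trans (pdiv_dvd G)) ?dvdn_gcdr.
    have ol : odd (pdiv G).
      apply/negPn/negP => /negbTE el.
      by move: on; rewrite -(negbK (odd n)) -dvdn2 (dvdn_trans _ ln) // dvdn2 el.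
    have clq : coprime (pdiv G) q by apply: coprime_dvdl ln cnq.
    have := Hc _ pl ln.
    by case/andP: (NT1 pl ol clq os lq) => h1 h2; rewrite h1 (negbTE h2).
  + rewrite G1 expr1 in es.
    have r1 : root (map_poly io ('X - 1)) a by rewrite rmorphB /= map_polyX rmorph1 /root !hornerE es subrr.
    rewrite Hr in r1.
    have sf : size f = 2%N.
      apply/eqP; rewrite eqn_leq fI.1 andbT.
      have X0 : ('X - 1 : {poly F}) != 0 by rewrite -polyC1 polyXsubC_eq0.
      by rewrite (leq_trans (dvdp_leq X0 r1)) // -polyC1 size_XsubC.
    have XM : ('X - 1 : {poly F}) \is monic by rewrite -polyC1 monicXsubC.
    apply/eqP; rewrite -(eqp_monic fM XM).
    by rewrite -dvdp_size_eqp // sf -polyC1 size_XsubC.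
Qed.
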